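(* Let $n\ge 2$ and $r>2$ be integers, and let $u,v$ be vertices of $G(n,r)$ with graph distance $d_{G(n,r)}(u,v)\le 2$. Then the number of moves $b\in\mathcal{B}$ such that both $u+b$ and $v+b$ have all entries non-negative (i.e. $b$ is a valid move from both $u$ and $v$) is at least $\binom{n}{2}$.
   Context: For integers $n,r\ge 1$, $G(n,r)$ is the simple undirected graph whose vertices are the $n\times n$ matrices with non-negative integer entries all of whose row sums and column sums equal $r$. Let $e_{ij}$ be the $n\times n$ matrix with a $1$ in position $(i,j)$ and $0$ elsewhere, and let $\mathcal{B}=\{\pm(e_{ij}+e_{kl}-e_{il}-e_{kj}) : 1\le i<k\le n,\ 1\le j<l\le n\}$ (the Markov moves). Two vertices $u,v$ are adjacent iff $u-v\in\mathcal{B}$; distance is the usual shortest-path distance in this graph. *)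

(* Defs.v *)
From HB Require Import structures.
From mathcomp Require Import all_boot all_order all_algebra.
Set Implicit Arguments. Unset Strict Implicit. Unset Printing Implicit Defensive.
Import Order.TTheory GRing.Theory Num.Theory.
Local Open Scope ring_scope.

Definition nonneg_mx (n : nat) (A : 'M[int]_n) : Prop :=
  forall i j, 0 <= A i j.

Definition is_vertex (n r : nat) (A : 'M[int]_n) : Prop :=
  nonneg_mx A /\
  (forall i, \sum_(j < n) A i j = (r%:Z)) /\
  (forall j, \sum_(i < n) A i j = (r%:Z)).

Definition move_mx (n : nat) (i j k l : 'I_n) : 'M[int]_n :=
  delta_mx i j + delta_mx k l - delta_mx i l - delta_mx k j.

Definition move_of (n : nat) (t : 'I_n * 'I_n * 'I_n * 'I_n * bool) : 'M[int]_n :=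
  let: (i, j, k, l, s) := t in
  if s then move_mx i j k l else - move_mx i j k l.

Definition move_index_ok (n : nat) (t : 'I_n * 'I_n * 'I_n * 'I_n * bool) : bool :=
  let: (i, j, k, l, _) := t in (i < k)%N && (j < l)%N.

Definition is_move (n : nat) (b : 'M[int]_n) : Prop :=
  exists t, move_index_ok t /\ b = move_of t.

Definition adjacent (n r : nat) (u v : 'M[int]_n) : Prop :=
  is_vertex r u /\ is_vertex r v /\ is_move (u - v).

Fixpoint within (n r k : nat) (u v : 'M[int]_n) : Prop :=
  match k with
  | O => u = v
  | S k' => u = v \/ exists w, adjacent r u w /\ within r k' w v
  end.

Definition validb (n : nat) (u b : 'M[int]_n) : bool :=
  [forall i, forall j, 0 <= (u + b) i j].

Definition common_moves (n : nat) (u v : 'M[int]_n) : nat :=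
  size (undup [seq move_of t | t <- enum [pred t : 'I_n * 'I_n * 'I_n * 'I_n * bool |
                 move_index_ok t && validb u (move_of t) && validb v (move_of t)]]).

(* Main.v *)
Require Import Defs.
From HB Require Import structures.
From mathcomp Require Import all_boot all_order all_algebra.
From mathcomp Require Import zify.
Import Order.TTheory GRing.Theory Num.Theory.
Set Implicit Arguments. Unset Strict Implicit. Unset Printing Implicit Defensive.

Lemma card_Dom n (z : 'I_n -> 'I_n) : #|[set iy : 'I_n * 'I_n | iy.2 != z iy.1]| = n * n.-1.
Proof.
rewrite -sum1_card.
rewrite (eq_bigl (fun iy : 'I_n*'I_n => true && (iy.2 != z iy.1))); last by move=> x; rewrite inE.
rewrite -(pair_big_dep xpredT (fun i j => j != z i) (fun _ _ => 1)) /=.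
rewrite (eq_bigr (fun _ => n.-1)); last first.
  move=> i _. by rewrite sum1_card cardC1 card_ord.
by rewrite sum_nat_const card_ord.
Qed.

Definition cfun n (E : rel 'I_n) (i : 'I_n) : 'I_n := odflt i [pick j | E i j].
Definition rfun n (E : rel 'I_n) (j : 'I_n) : 'I_n := odflt j [pick i | E i j].

Lemma cfunP n (E : rel 'I_n) (hr : forall i, exists j, E i j) i : E i (cfun E i).
Proof. rewrite /cfun; case: pickP => [j //|H]; case: (hr i) => j Hj; by rewrite H in Hj. Qed.
Lemma rfunP n (E : rel 'I_n) (hc : forall j, exists i, E i j) j : E (rfun E j) j.
Proof. rewrite /rfun; case: pickP => [i //|H]; case: (hc j) => i Hi; by rewrite H in Hi. Qed.

Definition Dset n (E : rel 'I_n) : {set ('I_n*'I_n)*('I_n*'I_n)} :=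
  [set pq | [&& E pq.1.1 pq.1.2, E pq.2.1 pq.2.2, pq.1.1 != pq.2.1 & pq.1.2 != pq.2.2]].

Definition Ffun n (E : rel 'I_n) (iy : 'I_n * 'I_n) : ('I_n*'I_n)*('I_n*'I_n) :=
  let: (i, y) := iy in
  match [pick j | E i j && (j != cfun E i)] with
  | Some j2 => match [pick l | E y l && (l != cfun E i)] with
               | Some l => ((i, cfun E i), (y, l))
               | None => ((i, j2), (y, cfun E y)) end
  | None => ((i, cfun E i), (rfun E y, y)) end.

Definition zfun n (E : rel 'I_n) (i : 'I_n) : 'I_n :=
  if [pick j | E i j && (j != cfun E i)] is Some _ then i else cfun E i.

Lemma Ffun_inj n (E : rel 'I_n) : injective (Ffun E).
Proof.
move=> [i y] [i' y']; rewrite /Ffun.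
have H1 : forall (a b : 'I_n), (Ffun E (a, b)).1.1 = a.
  move=> a b; rewrite /Ffun; case: pickP => [j2 _|_]; last by [].
  by case: pickP.
move=> Heq. have ei : i = i'.
  by move: (H1 i y) (H1 i' y'); rewrite /Ffun Heq => -> .
subst i'. move: Heq.
case: pickP => [j2 _|_].
  case: pickP => [l _|_]; case: pickP => [l' _|_] //=; by case=> *; subst.
by case=> *; subst.
Qed.

Lemma Ffun_in n (E : rel 'I_n) (hr : forall i, exists j, E i j) (hc : forall j, exists i, E i j)
  iy : iy.2 != zfun E iy.1 -> Ffun E iy \in Dset E.
Proof.
case: iy => i y /=; rewrite /zfun /Ffun /Dset.
case: pickP => [j2 /andP [Hj2 nj2]|Hn] Hy.
  case: pickP => [l /andP [Hl nl]|Hl]; rewrite inE /=.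
    by rewrite cfunP //= Hl eq_sym Hy eq_sym nl.
  have ecy : cfun E y = cfun E i.
    apply/eqP; move: (Hl (cfun E y)); rewrite cfunP //=.
    by move/negbT; rewrite negbK.
  by rewrite Hj2 cfunP //= eq_sym Hy ecy.
rewrite inE /= cfunP // rfunP //=. idtac.
rewrite [cfun E i == y]eq_sym Hy andbT; apply/eqP => ei; by move: (Hn y); rewrite {1}ei rfunP //= Hy.
Qed.

Lemma Dset_big n (E : rel 'I_n) (hr : forall i, exists j, E i j) (hc : forall j, exists i, E i j) :
  n * n.-1 <= #|Dset E|.
Proof.
rewrite -(card_Dom (zfun E)) -(card_imset _ (@Ffun_inj n E)).
apply: subset_leq_card; apply/subsetP => x /imsetP [iy]; rewrite inE => H ->.
exact: Ffun_in.
Qed.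

Definition Dlt n (E : rel 'I_n) := [set pq in Dset E | pq.1.1 < pq.2.1].

Lemma Dlt_big n (E : rel 'I_n) (hr : forall i, exists j, E i j) (hc : forall j, exists i, E i j) :
  'C(n, 2) <= #|Dlt E|.
Proof.
have H := Dset_big hr hc.
pose sw := fun pq : ('I_n*'I_n)*('I_n*'I_n) => (pq.2, pq.1).
have sub : Dset E \subset Dlt E :|: sw @: Dlt E.
  apply/subsetP => [[p q]] Hpq; rewrite in_setU.
  have Hpq' := Hpq; rewrite inE /= in Hpq'.
  case/and4P: Hpq' => Ep Eq npq1 npq2.
  case: (ltngtP p.1 q.1) => [lt|gt|eq].
  - by apply/orP; left; rewrite inE Hpq /=.
  - apply/orP; right; apply/imsetP; exists (q, p) => //.
    by rewrite !inE /= Ep Eq gt eq_sym npq1 eq_sym npq2.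
  - by move: npq1; rewrite (val_inj eq) eqxx.
have := subset_leq_card sub.
have := cardsU (Dlt E) (sw @: Dlt E).
have := leq_imset_card sw (Dlt E).
rewrite bin2 -divn2. move: H; move: (n * n.-1) => m. move: #|Dset E| #|Dlt E| #|[set sw x | x in Dlt E]| #|Dlt E :&: [set sw x | x in Dlt E]| #|Dlt E :|: [set sw x | x in Dlt E]| => a b c d e. lia.
Qed.

Local Open Scope ring_scope.

Definition fval (A1 A2 C1 C2 : bool) : int :=
  (A1 && C2)%:R + (A2 && C1)%:R - (A1 && C1)%:R - (A2 && C2)%:R.

Lemma fval_m1 A1 A2 C1 C2 : ~~ (A1 && A2) -> ~~ (C1 && C2) ->
  (fval A1 A2 C1 C2 == -1) = (A1 && C1 || A2 && C2).
Proof. by case: A1; case: A2; case: C1; case: C2. Qed.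

Lemma fval_valid A1 A2 C1 C2 (x : int) : ~~ (A1 && A2) ->
  0 <= x -> (A1 && C1 -> 0 < x) -> (A2 && C2 -> 0 < x) -> 0 <= x + fval A1 A2 C1 C2.
Proof.
rewrite /fval; case: A1; case: A2; case: C1; case: C2 => //= _ h0; 
  try (move=> h1 h2; have := h1 isT); try (move=> h1 h2; have := h2 isT); try lia.
Qed.

Lemma fval_abs A1 A2 C1 C2 : `|fval A1 A2 C1 C2| <= (A1%:R + A2%:R) * (C1%:R + C2%:R).
Proof. by rewrite /fval; case: A1; case: A2; case: C1; case: C2. Qed.

Definition Nmx n (p q : 'I_n * 'I_n) : 'M[int]_n :=
  delta_mx p.1 q.2 + delta_mx q.1 p.2 - delta_mx p.1 p.2 - delta_mx q.1 q.2.

Lemma NmxE n (p q : 'I_n * 'I_n) a c :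
  Nmx p q a c = fval (a == p.1) (a == q.1) (c == p.2) (c == q.2).
Proof. by rewrite /Nmx !mxE. Qed.

Lemma move_mxE n (i j k l : 'I_n) a c : move_mx i j k l a c = fval (a==i) (a==k) (c==l) (c==j).
Proof. by rewrite /move_mx !mxE. Qed.

Definition tidx n (pq : ('I_n*'I_n)*('I_n*'I_n)) : 'I_n * 'I_n * 'I_n * 'I_n * bool :=
  let: (p, q) := pq in
  if (p.2 < q.2)%N then (p.1, p.2, q.1, q.2, false) else (p.1, q.2, q.1, p.2, true).

Lemma move_tidx n (pq : ('I_n*'I_n)*('I_n*'I_n)) : move_of (tidx pq) = Nmx pq.1 pq.2.
Proof.
case: pq => p q /=; rewrite /tidx /move_of.
case: ifP => _; apply/matrixP => a c; rewrite ?mxE //.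
by case: (a == p.1); case: (a == q.1); case: (c == p.2); case: (c == q.2).
Qed.

Definition smallm n (b : 'M[int]_n) :=
  (forall a, \sum_c `|b a c| <= 2) /\ (forall c, \sum_a `|b a c| <= 2).

Lemma sum_ind n (j : 'I_n) : \sum_(c < n) ((c == j)%:R : int) = 1.
Proof.
rewrite (bigD1 j) //= (_ : (j == j) = true); last by apply/eqP.
rewrite big1 ?addr0 // => c /negbTE -> //.
Qed.

Lemma small_mx n (i j k l : 'I_n) (s : bool) : i != k -> j != l ->
  smallm (if s then move_mx i j k l else - move_mx i j k l).
Proof.
move=> nik njl.
have H : forall a c, `|(if s then move_mx i j k l else - move_mx i j k l) a c| <=
   ((a==i)%:R + (a==k)%:R) * ((c==l)%:R + (c==j)%:R).
  move=> a c; case: s; first by rewrite move_mxE fval_abs.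
  have -> : (- move_mx i j k l) a c = - move_mx i j k l a c by rewrite !mxE.
  by rewrite normrN move_mxE fval_abs.
split.
  move=> a; apply: le_trans (ler_sum _ (fun c _ => H a c)) _.
  rewrite -mulr_sumr big_split /= !sum_ind.
  case: (a =P i) => [->|_]; case: (a =P k) => [ak|_] //=; try lia.
move=> c; apply: le_trans (ler_sum _ (fun a _ => H a c)) _.
rewrite -mulr_suml big_split /= !sum_ind.
case: (c =P l) => [->|_]; case: (c =P j) => [cj|_] //=; try lia.
all: by rewrite eq_sym (negbTE njl).
Qed.

Lemma move_small n (b : 'M[int]_n) : is_move b -> smallm b.
Proof.
case=> [[[[[i j] k] l] s]] [/= /andP [ik jl] ->].
by apply: small_mx; rewrite neq_ltn ?ik ?jl.
Qed.

Lemma small0 n : smallm (0 : 'M[int]_n).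
Proof. by split => ?; rewrite big1 // => ? _; rewrite mxE normr0. Qed.

Lemma core (N : nat) (r : nat) (f g h1 h2 : 'I_N -> int) :
 (forall c, 0 <= f c) -> (forall c, 0 <= g c) -> \sum_c f c = r%:Z -> \sum_c g c = r%:Z ->
 (forall c, f c - g c = h1 c + h2 c) -> \sum_c `|h1 c| <= 2 -> \sum_c `|h2 c| <= 2 -> (2 < r)%N ->
 exists c, (0 < f c) && (0 < g c).
Proof.
move=> f0 g0 sf sg hd s1 s2 r2.
case: (boolP [exists c, (0 < f c) && (0 < g c)]) => [/existsP //|].
rewrite negb_exists => /forallP H.
have E : forall c, f c + g c <= `|h1 c| + `|h2 c|.
  move=> c; have := ler_normD (h1 c) (h2 c); rewrite -hd.
  move: (H c) (f0 c) (g0 c); lia.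
have : \sum_c (f c + g c) <= \sum_c (`|h1 c| + `|h2 c|) by apply: ler_sum => c _; exact: E.
rewrite !big_split /= sf sg => S; exfalso; move: s1 s2 r2 S.
move: (\sum_c `|h1 c|) (\sum_c `|h2 c|) => x y. lia.
Qed.

Lemma within_dec n r (u v : 'M[int]_n) : within r 2 u v ->
  exists b1 b2, smallm b1 /\ smallm b2 /\ u - v = b1 + b2.
Proof.
case=> [->|[w [[_ [_ m1]] [ew|[w' [[_ [_ m2]] ew]]]]]].
- by exists 0, 0; rewrite subrr addr0; split; [exact: small0 | split; [exact: small0|]].
- subst w; exists (u - v), 0; rewrite addr0; split; [exact: move_small | split; [exact: small0 |]] => //.
- rewrite /= in ew; subst w'.
  exists (u - w), (w - v); split; [exact: move_small | split; [exact: move_small |]].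
  by rewrite addrA subrK.
Qed.

Lemma rows_ok n r (u v : 'M[int]_n) : (2 < r)%N -> is_vertex r u -> is_vertex r v ->
  within r 2 u v ->
  (forall i, exists j, (0 < u i j) && (0 < v i j)) /\ (forall j, exists i, (0 < u i j) && (0 < v i j)).
Proof.
move=> r2 [u0 [ur uc]] [v0 [vr vc]] /within_dec [b1 [b2 [[s1r s1c] [[s2r s2c] e]]]].
have hd : forall a c, u a c - v a c = b1 a c + b2 a c.
  by move=> a c; have := congr1 (fun M : 'M[int]_n => M a c) e; rewrite !mxE.
split.
  move=> a; apply: (@core n r (u a) (v a) (b1 a) (b2 a)) => //.
move=> c; apply: (@core n r (fun a => u a c) (fun a => v a c) (fun a => b1 a c) (fun a => b2 a c)) => //.

Qed.

Lemma Nkey n (p q : 'I_n * 'I_n) : p.1 != q.1 -> p.2 != q.2 ->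
  forall a c, (Nmx p q a c == -1) = ((a, c) == p) || ((a, c) == q).
Proof.
case: p => p1 p2; case: q => q1 q2 /= h1 h2 a c.
rewrite NmxE fval_m1 //=.
  apply/negP => /andP [/eqP -> /eqP e]; by rewrite e eqxx in h1.
apply/negP => /andP [/eqP -> /eqP e]; by rewrite e eqxx in h2.
Qed.

Lemma Nmx_inj n (E : rel 'I_n) : {in Dlt E &, injective (fun pq => Nmx pq.1 pq.2)}.
Proof.
move=> [p q] [p' q']; rewrite !inE /=.
case/andP => /and4P [_ _ n1 n2] l1; case/andP => /and4P [_ _ n1' n2'] l1' e.
have K : forall x, ((x == p) || (x == q)) = ((x == p') || (x == q')).
  case=> a c; by rewrite -Nkey // -Nkey // e.
have hp' : (p' == p) || (p' == q) by rewrite K eqxx.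
have hq' : (q' == p) || (q' == q) by rewrite K eqxx orbT.
have hp : (p == p') || (p == q') by rewrite -K eqxx.
case/orP: hp' => /eqP ep'; subst p'.
  case/orP: hq' => /eqP eq'; subst q' => //.
  by rewrite ltnn in l1'.
case/orP: hp => /eqP ep; subst p.
  by rewrite ltnn in l1.
by move: l1 l1'; lia.
Qed.

Lemma tidx_ok n (pq : ('I_n*'I_n)*('I_n*'I_n)) : (pq.1.1 < pq.2.1)%N -> pq.1.2 != pq.2.2 ->
  move_index_ok (tidx pq).
Proof.
case: pq => p q /= l n2; rewrite /tidx /move_index_ok.
case: ifP => /= h; rewrite l //=.
by rewrite ltn_neqAle leqNgt h andbT eq_sym.
Qed.

Lemma Nvalid n r (u : 'M[int]_n) (p q : 'I_n * 'I_n) : is_vertex r u ->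
  p.1 != q.1 -> 0 < u p.1 p.2 -> 0 < u q.1 q.2 -> validb u (Nmx p q).
Proof.
case: p => p1 p2; case: q => q1 q2 [u0 _] /= h1 up uq.
apply/forallP => a; apply/forallP => c; rewrite mxE NmxE /=; apply: fval_valid => //.
- apply/negP => /andP [/eqP -> /eqP e]; by rewrite e eqxx in h1.
- by case/andP => /eqP -> /eqP ->.
- by case/andP => /eqP -> /eqP ->.
Qed.

Lemma common_ge n r (u v : 'M[int]_n) : is_vertex r u -> is_vertex r v ->
  (#|Dlt (fun i j => (0 < u i j)%R && (0 < v i j)%R)| <= common_moves u v)%N.
Proof.
move=> Vu Vv; set E := (fun i j => _).
rewrite /common_moves cardE -(size_map (fun pq => Nmx pq.1 pq.2)).
apply: uniq_leq_size.
  rewrite map_inj_in_uniq ?enum_uniq // => x y; rewrite !mem_enum; exact: Nmx_inj.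
move=> x /mapP [pq]; rewrite mem_enum => H ->; rewrite mem_undup.
apply/mapP; exists (tidx pq); last by rewrite move_tidx.
move: H; rewrite mem_enum !inE; case: pq => p q.
case/andP => /and4P [/andP [u1 v1] /andP [u2 v2] n1 n2] l.
rewrite tidx_ok // move_tidx.
by rewrite (Nvalid Vu) // (Nvalid Vv).
Qed.

Local Close Scope ring_scope.

Theorem lemma2p4 (n r : nat) (u v : 'M[int]_n) :
  (2 <= n)%N -> (2 < r)%N ->
  is_vertex r u -> is_vertex r v ->
  within r 2 u v ->
  ('C(n, 2) <= common_moves u v)%N.
Proof.
move=> n2 r2 Vu Vv W.
have [hr hc] := rows_ok r2 Vu Vv W.
apply: leq_trans (Dlt_big hr hc) _.
exact: common_ge Vu Vv.
Qed.
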